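(* Let $K_{m_1,m_2}$ be the complete bipartite graph with bipartition $(X,Y)$, $|X|=m_1$, $|Y|=m_2$, where $2\le m_1\le m_2$. If $S\subseteq X$ and $|S|\ge 2$, then $\kappa^*_{K_{m_1,m_2}}(S)=m_2$. If $S\subseteq Y$ and $|S|\ge 2$, then $\kappa^*_{K_{m_1,m_2}}(S)=m_1$.
   Context: For $S\subseteq V(G)$ with $|S|\ge 2$, an $S$-Steiner tree of $G$ is a subtree $T$ of $G$ with $S\subseteq V(T)$ all of whose leaves belong to $S$. A family of $S$-Steiner trees $T_1,\dots,T_k$ is completely independent if for all $1\le p<q\le k$: $E(T_p)\cap E(T_q)=\emptyset$, $V(T_p)\cap V(T_q)=S$, and for any two vertices $x_1,x_2\in S$ the $(x_1,x_2)$-paths in $T_p$ and in $T_q$ are internally disjoint. $\kappa^*_G(S)$ is the maximum number of trees in a completely independent family of $S$-Steiner trees in $G$. *)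

(* Defs.v *)
From mathcomp Require Import all_boot.
Set Implicit Arguments. Unset Strict Implicit. Unset Printing Implicit Defensive.

Section Graphs.
Variable V : finType.

(* A subgraph: a vertex set and a set of edges, each edge a 2-element set. *)
Definition subgraph := ({set V} * {set {set V}})%type.

Definition edges_ok (adj : rel V) (H : subgraph) : Prop :=
  forall e, e \in H.2 -> exists x y,
    [/\ x \in H.1, y \in H.1, x != y, adj x y & e = [set x; y]].

Definition hrel (H : subgraph) : rel V := fun u v => [set u; v] \in H.2.

Definition is_path (H : subgraph) (x y : V) (p : seq V) : Prop :=
  exists s, [/\ p = x :: s, x \in H.1, path (hrel H) x s,
               last x s = y & uniq p].

Definition connected (H : subgraph) : Prop :=
  forall x y, x \in H.1 -> y \in H.1 -> exists p, is_path H x y p.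

Definition acyclic (H : subgraph) : Prop :=
  forall c : seq V, 3 <= size c -> uniq c -> ~~ cycle (hrel H) c.

Definition is_tree (adj : rel V) (H : subgraph) : Prop :=
  [/\ edges_ok adj H, connected H & acyclic H].

Definition degree (H : subgraph) (v : V) : nat := #|[set e in H.2 | v \in e]|.

Definition leaf (H : subgraph) (v : V) : Prop := v \in H.1 /\ degree H v = 1.

Definition steiner_tree (adj : rel V) (S : {set V}) (H : subgraph) : Prop :=
  [/\ is_tree adj H, S \subset H.1 & forall v, leaf H v -> v \in S].

Definition internal (x y : V) (p : seq V) : pred V :=
  [pred v | (v \in p) && (v != x) && (v != y)].

Definition compl_indep (adj : rel V) (S : {set V}) (k : nat)
    (T : 'I_k -> subgraph) : Prop :=
  (forall i, steiner_tree adj S (T i)) /\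
  forall p q : 'I_k, p < q ->
    [/\ [disjoint (T p).2 & (T q).2],
        (T p).1 :&: (T q).1 = S &
        forall x1 x2 P Q, x1 \in S -> x2 \in S ->
          is_path (T p) x1 x2 P -> is_path (T q) x1 x2 Q ->
          [disjoint internal x1 x2 P & internal x1 x2 Q]].

Definition kappa_star_eq (adj : rel V) (S : {set V}) (k : nat) : Prop :=
  (exists T : 'I_k -> subgraph, compl_indep adj S T) /\
  forall k' (T : 'I_k' -> subgraph), compl_indep adj S T -> k' <= k.

End Graphs.

Definition Kadj (m1 m2 : nat) : rel ('I_m1 + 'I_m2)%type :=
  fun x y => match x, y with
             | inl _, inr _ => true
             | inr _, inl _ => true
             | _, _ => false
             end.

Definition Xpart (m1 m2 : nat) : {set ('I_m1 + 'I_m2)%type} :=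
  [set x | if x is inl _ then true else false].
Definition Ypart (m1 m2 : nat) : {set ('I_m1 + 'I_m2)%type} :=
  [set x | if x is inr _ then true else false].
Arguments Kadj : clear implicits.
Arguments Xpart : clear implicits.
Arguments Ypart : clear implicits.

(* Main.v *)
Require Import Defs.
From mathcomp Require Import all_boot.
Set Implicit Arguments. Unset Strict Implicit. Unset Printing Implicit Defensive.

Section Gen.
Variable V : finType.

Definition star (S : {set V}) (c : V) : subgraph V :=
  (c |: S, [set [set s; c] | s in S]).

Lemma star_hrel (S : {set V}) (c u v : V) : hrel (star S c) u v -> (u == c) || (v == c).
Proof.
rewrite /hrel /= => /imsetP [s _ E].
have : c \in [set u; v] by rewrite E !inE eqxx orbT.
by rewrite !inE => /orP [] /eqP ->; rewrite eqxx ?orbT.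
Qed.

Lemma internal_center (H : subgraph V) c x1 x2 P v :
  (forall u w, hrel H u w -> (u == c) || (w == c)) ->
  is_path H x1 x2 P -> v \in internal x1 x2 P -> v = c.
Proof.
move=> Hc [s [-> _ Hp Hl Hu]]; rewrite inE /= => /andP [/andP [vP vx1] vx2].
apply/eqP; apply/negPn/negP => vc.
have vs : v \in s by move: vP; rewrite inE (negbTE vx1).
move: Hp Hl Hu; case/splitPr: vs => s1 s2.
rewrite cat_path last_cat /= => /andP [_ /andP [h1 h2]].
case: s2 h2 => [|w s2] /=.
  by move=> _ lv; move: vx2; rewrite lv eqxx.
move=> /andP [h3 _] _ Hu.
have lc : last x1 s1 == c by move: (Hc _ _ h1); rewrite (negbTE vc) orbF.
have wc : w == c by move: (Hc _ _ h3); rewrite (negbTE vc).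
move: Hu => /andP [x1n]; rewrite cat_uniq => /and3P [_ /hasPn Hn _].
have := Hn w; rewrite !inE eqxx orbT => /(_ isT) wn.
have := mem_last x1 s1; rewrite inE (eqP lc) -(eqP wc) (negbTE wn) orbF => /eqP E.
by move: x1n; rewrite -E mem_cat !inE eqxx !orbT.
Qed.

Lemma star_edge (S : {set V}) (c s : V) : s \in S -> hrel (star S c) s c /\ hrel (star S c) c s.
Proof.
move=> sS; rewrite /hrel /=; split; last rewrite setUC;
  by apply/imsetP; exists s.
Qed.

Lemma star_tree (adj : rel V) (S : {set V}) (c : V) :
  c \notin S -> 1 < #|S| -> (forall s, s \in S -> adj s c) ->
  steiner_tree adj S (star S c).
Proof.
move=> cS S2 adjS.
have neq : forall s, s \in S -> s != c.
  by move=> s sS; apply: contraNneq cS => <-.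
split; [split | exact: subsetUr | ].
- move=> e /imsetP [s sS ->]; exists s, c.
  by rewrite !inE eqxx sS orbT; rewrite (neq s sS) adjS.
- move=> x y; rewrite !inE => /orP [/eqP->|xS] /orP [/eqP->|yS].
  + by exists [:: c]; exists [::]; split; rewrite // !inE eqxx.
  + exists [:: c; y]; exists [:: y]; split; rewrite //= ?inE ?eqxx //.
      by case: (star_edge c yS) => _ ->.
    by rewrite eq_sym neq.
  + exists [:: x; c]; exists [:: c]; split; rewrite //= ?inE ?xS ?orbT //.
      by case: (star_edge c xS) => ->.
    by rewrite neq.
  + case: (eqVneq x y) => [<-|xy].
      by exists [:: x]; exists [::]; split; rewrite // !inE xS orbT.
    exists [:: x; c; y]; exists [:: c; y]; split; rewrite //= ?inE ?xS ?orbT //.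
      by case: (star_edge c xS) => -> _; case: (star_edge c yS) => _ ->.
    by rewrite (negbTE (neq x xS)) (negbTE xy) eq_sym neq.
- move=> [|a [|b [|d r]]] //= _ Hu.
  apply/and3P => [[e1 e2 e3]].
  have fin : forall z, hrel (star S c) d z -> z != b -> a != d -> b != d -> False.
    move=> z e4 zb ad bd.
    have bc : b == c.
      move: (star_hrel e1) (star_hrel e2); case: (eqVneq b c) => // _.
      by rewrite orbF /= => /eqP Ea /eqP Ed; move: ad; rewrite Ea Ed eqxx.
    move: (star_hrel e4) => /orP [] /eqP E.
      by move: bd; rewrite E (eqP bc) eqxx.
    by move: zb; rewrite E (eqP bc) eqxx.
  case: r Hu e3 => [|z r] /=; rewrite !inE.
    move=> /and3P [/norP [ab ad] bd _] /andP [e5 _].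
    by apply: (fin a e5) => //; rewrite eq_sym.
  move=> /and5P [/norP [_ /norP [ad _]] /norP [bd /norP [bz _]] /norP [dz _] _ _] /andP [e5 _].
  by apply: (fin z e5); rewrite // eq_sym.
- move=> v [vin dv]; move: vin; rewrite !inE => /orP [/eqP E|] //.
  exfalso; move: dv; rewrite E /degree.
  case/card_gt1P: S2 => s1 [s2 [s1S s2S s12]].
  have : 1 < #|[set [set s1; c]; [set s2; c]]|.
    rewrite cards2 ltnS lt0b; apply/eqP => Es.
    have : s1 \in [set s2; c] by rewrite -Es !inE eqxx.
    rewrite !inE (negbTE s12) /= => /eqP E1; move: cS; rewrite -E1 s1S //.
  move=> h1 h2; move: h1; rewrite ltnNge => /negP; apply.
  rewrite -h2; apply: subset_leq_card; apply/subsetP => e.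
  by rewrite !inE => /orP [] /eqP ->; rewrite !inE eqxx ?orbT /= andbT; apply/imsetP; [exists s1 | exists s2].

Qed.

Lemma family (adj : rel V) (S : {set V}) k (g : 'I_k -> V) :
  injective g -> (forall i, g i \notin S) ->
  (forall i s, s \in S -> adj s (g i)) -> 1 < #|S| ->
  compl_indep adj S (fun i => star S (g i)).
Proof.
move=> gi gS gadj S2; split => [i|p q pq]; first by apply: star_tree => // s sS; apply: gadj.
have gpq : g p != g q by apply: contraTneq pq => /gi ->; rewrite ltnn.
split.
- apply/pred0P => e /=; apply/negbTE/andP => [[/imsetP [s sS ->] /imsetP [s' s'S E]]].
  have : g p \in [set s'; g q] by rewrite -E !inE eqxx orbT.
  by rewrite !inE (negbTE gpq) orbF => /eqP E'; move: (gS p); rewrite E' s'S.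
- apply/setP => v; rewrite !inE; case: (boolP (v \in S)) => vS; rewrite ?orbT ?orbF //=.
  by apply/negbTE/andP => [[/eqP e1 /eqP e2]]; move: gpq; rewrite -e1 -e2 eqxx.
- move=> x1 x2 P Q _ _ HP HQ; apply/pred0P => v /=; apply/negbTE/andP => [[i1 i2]].
  have E1 := internal_center (@star_hrel S (g p)) HP i1.
  have E2 := internal_center (@star_hrel S (g q)) HQ i2.
  by move: gpq; rewrite -E1 -E2 eqxx.
Qed.

Lemma upper (adj : rel V) (A S : {set V}) k (T : 'I_k -> subgraph V) :
  S \subset A -> 1 < #|S| ->
  (forall x y, adj x y -> x \in A -> y \in A -> False) ->
  compl_indep adj S T -> k <= #|~: A|.
Proof.
move=> SA S2 indep [HT Hpq].
case/card_gt1P: (S2) => s1 [s2 [s1S s2S s12]].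
have ex : forall i, exists v, v \in (T i).1 :\: A.
  move=> i; case: (HT i) => [[Hok Hc _] Ssub _].
  have s1T : s1 \in (T i).1 by apply: (subsetP Ssub).
  have s2T : s2 \in (T i).1 by apply: (subsetP Ssub).
  case: (Hc _ _ s1T s2T) => P [s [_ _ Hp Hl _]].
  case: s Hp Hl => [|v s] /=; first by move=> _ E; move: s12; rewrite E eqxx.
  case/andP => e _ _.
  case: (Hok _ e) => x [y [xT yT _ axy E]].
  exists v; rewrite !inE.
  have vxy : v \in [set x; y] by rewrite -E !inE eqxx orbT.
  case vA: (v \in A) => /=.
    exfalso.
    have inA : forall z, z \in [set s1; v] -> z \in A.
      by move=> z; rewrite !inE => /orP [] /eqP ->; [exact: (subsetP SA _ s1S) | exact vA].
    by apply: (indep x y axy); apply: inA; rewrite E !inE eqxx ?orbT.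
  by move: vxy; rewrite !inE => /orP [] /eqP ->.
pose f i := odflt s1 [pick v in (T i).1 :\: A].
have fP : forall i, f i \in (T i).1 :\: A.
  move=> i; rewrite /f; case: pickP => [v //|none].
  by case: (ex i) => v vin; move: (none v) => /=; rewrite vin.
have key : forall i j : 'I_k, i < j -> f i = f j -> False.
  move=> i j lt E; case: (Hpq i j lt) => _ HI _.
  have : f i \in (T i).1 :&: (T j).1.
    move: (fP i) (fP j); rewrite !inE -E => /andP [_ ->] /andP [_ ->] //.
  rewrite HI => fS; move: (fP i); rewrite inE (subsetP SA _ fS) //.
have finj : injective f.
  move=> i j E; case: (ltngtP i j) => [lt|lt|/val_inj //].
    by case: (key _ _ lt E).
  by case: (key _ _ lt (esym E)).
rewrite -[k in k <= _](card_ord k) -cardsT -(card_imset _ finj).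
apply: subset_leq_card; apply/subsetP => v /imsetP [i _ ->].
by move: (fP i); rewrite !inE => /andP [].
Qed.

End Gen.

Lemma cardCX m1 m2 : #|~: Xpart m1 m2| = m2.
Proof.
have -> : ~: Xpart m1 m2 = [set inr y | y : 'I_m2].
  apply/setP => x; case: x => [x|y]; rewrite !inE /=.
    by apply/esym/imsetP => [[y _]].
  by apply/esym/imsetP; exists y.
by rewrite card_imset ?card_ord //; apply: inr_inj.
Qed.

Lemma cardCY m1 m2 : #|~: Ypart m1 m2| = m1.
Proof.
have -> : ~: Ypart m1 m2 = [set inl y | y : 'I_m1].
  apply/setP => x; case: x => [y|x]; rewrite !inE /=.
    by apply/esym/imsetP; exists y.
  by apply/esym/imsetP => [[y _]].
by rewrite card_imset ?card_ord //; apply: inl_inj.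
Qed.

Theorem theorem3p1 (m1 m2 : nat) (S : {set ('I_m1 + 'I_m2)%type}) :
  2 <= m1 -> m1 <= m2 -> 2 <= #|S| ->
  (S \subset Xpart m1 m2 -> kappa_star_eq (Kadj m1 m2) S m2) /\
  (S \subset Ypart m1 m2 -> kappa_star_eq (Kadj m1 m2) S m1).
Proof.
move=> h1 h2 hS; split => SA; split.
- exists (fun i => star S (inr i)); apply: family => //.
  + exact: inr_inj.
  + by move=> i; apply/negP => /(subsetP SA); rewrite inE.
  + by move=> i s /(subsetP SA); rewrite inE; case: s.
- move=> k' T HT; rewrite -(cardCX m1 m2); apply: upper HT => //.
  by move=> [x|x] [y|y] //; rewrite !inE.
- exists (fun i => star S (inl i)); apply: family => //.
  + exact: inl_inj.
  + by move=> i; apply/negP => /(subsetP SA); rewrite inE.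
  + by move=> i s /(subsetP SA); rewrite inE; case: s.
- move=> k' T HT; rewrite -(cardCY m1 m2); apply: upper HT => //.
  by move=> [x|x] [y|y] //; rewrite !inE.
Qed.
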